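(* Let $G$ be an amenable group and, for $i=1,\ldots,n$, let $A_i\subseteq G$ have positive Banach density $d(A_i)=\alpha_i$. Let $\beta=\prod_{i=1}^n\alpha_i$, $0\le\varepsilon<\beta^2$, and $r=\left\lfloor\frac{\beta-\varepsilon}{\beta^2-\varepsilon}\right\rfloor$. Then $\bigcap_{i=1}^n\Delta_\varepsilon(A_i)$ is $r$-syndetic, and its lower Banach density is at least $1/r$.
   Context: A finite $K\subseteq G$ is $(H,\varepsilon)$-invariant if $K\ne\emptyset$ and $|hK\triangle K|/|K|<\varepsilon$ for all $h\in H$; $G$ is amenable if such $K$ exist for every finite $H\subseteq G$ and $\varepsilon>0$. $d(A)$ is the supremum of all $\alpha$ such that for every finite $H$ and $\varepsilon>0$ there is an $(H,\varepsilon)$-invariant $K$ with $|A\cap K|/|K|\ge\alpha$; the lower Banach density $\underline{d}(A)$ is the supremum of all $\alpha$ such that for some finite $H$ and some $\varepsilon>0$ every $(H,\varepsilon)$-invariant $K$ satisfies $|A\cap K|/|K|\ge\alpha$. $\Delta_\varepsilon(A)=\{g\in G\mid d(A\cap gA)>\varepsilon\}$. A set $S\subseteq G$ is $k$-syndetic if $G=FS$ for some $F\subseteq G$ with $|F|\le k$. *)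

(* Defs.v *)
From Stdlib Require Import Reals List ClassicalEpsilon.
Import ListNotations.
Open Scope R_scope.

Record Group := {
  carrier :> Type;
  gmul : carrier -> carrier -> carrier;
  ginv : carrier -> carrier;
  gone : carrier;
  gmul_assoc : forall x y z, gmul x (gmul y z) = gmul (gmul x y) z;
  gmul_1l : forall x, gmul gone x = x;
  gmul_Vl : forall x, gmul (ginv x) x = gone
}.

Definition countP {T : Type} (P : T -> Prop) (l : list T) : nat :=
  length (filter (fun x => if excluded_middle_informative (P x) then true else false) l).

(* Finite subsets of G are represented by duplicate-free lists. *)
Definition symdiff_card (G : Group) (h : G) (K : list G) : nat :=
  let hK := map (gmul G h) K in
  (countP (fun x => ~ In x K) hK + countP (fun x => ~ In x hK) K)%nat.

Definition invariant (G : Group) (H : list G) (eps : R) (K : list G) : Prop :=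
  NoDup K /\ K <> [] /\
  forall h, In h H -> INR (symdiff_card G h K) / INR (length K) < eps.

Definition amenable (G : Group) : Prop :=
  forall (H : list G) (eps : R), 0 < eps -> exists K, invariant G H eps K.

Definition ratio (G : Group) (A : G -> Prop) (K : list G) : R :=
  INR (countP A K) / INR (length K).

Definition upper_admissible (G : Group) (A : G -> Prop) (alpha : R) : Prop :=
  forall (H : list G) (eps : R), 0 < eps ->
    exists K, invariant G H eps K /\ alpha <= ratio G A K.

Definition banach_density (G : Group) (A : G -> Prop) (d : R) : Prop :=
  is_lub (upper_admissible G A) d.

Definition lower_admissible (G : Group) (A : G -> Prop) (alpha : R) : Prop :=
  exists (H : list G) (eps : R), 0 < eps /\
    forall K, invariant G H eps K -> alpha <= ratio G A K.

Definition lower_banach_density (G : Group) (A : G -> Prop) (d : R) : Prop :=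
  is_lub (lower_admissible G A) d.

Definition ltranslate (G : Group) (g : G) (A : G -> Prop) : G -> Prop :=
  fun x => A (gmul G (ginv G g) x).

Definition DeltaSet (G : Group) (eps : R) (A : G -> Prop) : G -> Prop :=
  fun g => exists d, banach_density G (fun x => A x /\ ltranslate G g A x) d /\ eps < d.

Definition syndetic (G : Group) (k : nat) (S : G -> Prop) : Prop :=
  exists F : list G, (length F <= k)%nat /\
    forall g : G, exists f s, In f F /\ S s /\ g = gmul G f s.

Fixpoint prodR (f : nat -> R) (n : nat) : R :=
  match n with O => 1 | S m => prodR f m * f m end.

(* Main.v *)
Require Import Defs.
From Stdlib Require Import Reals List Lra Lia FunctionalExtensionality Classical FinFun ClassicalEpsilon.
Import ListNotations.
Open Scope R_scope.

Section GroupLemmas.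
End GroupLemmas.

Lemma gmul_Vr (G : Group) (x : G) : gmul G x (ginv G x) = gone G.
Proof.
  set (y := ginv G x).
  rewrite <- (gmul_1l G (gmul G x y)).
  rewrite <- (gmul_Vl G y).
  rewrite <- gmul_assoc.
  replace (gmul G y (gmul G x y)) with y.
  - reflexivity.
  - rewrite gmul_assoc. unfold y. rewrite gmul_Vl, gmul_1l. reflexivity.
Qed.

Lemma gmul_1r (G : Group) (x : G) : gmul G x (gone G) = x.
Proof.
  rewrite <- (gmul_Vl G x), gmul_assoc, gmul_Vr, gmul_1l. reflexivity.
Qed.

Lemma gmul_KV (G : Group) (a x : G) : gmul G (ginv G a) (gmul G a x) = x.
Proof. rewrite gmul_assoc, gmul_Vl, gmul_1l. reflexivity. Qed.

Lemma gmul_VK (G : Group) (a x : G) : gmul G a (gmul G (ginv G a) x) = x.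
Proof. rewrite gmul_assoc, gmul_Vr, gmul_1l. reflexivity. Qed.

Lemma ginv_unique (G : Group) (u v : G) : gmul G u v = gone G -> u = ginv G v.
Proof.
  intro H. rewrite <- (gmul_1r G u), <- (gmul_Vr G v), gmul_assoc, H, gmul_1l.
  reflexivity.
Qed.

Lemma ginv_mul (G : Group) (a b : G) :
  ginv G (gmul G a b) = gmul G (ginv G b) (ginv G a).
Proof.
  symmetry. apply ginv_unique.
  rewrite <- gmul_assoc, gmul_KV, gmul_Vl. reflexivity.
Qed.

Lemma ginv_inv (G : Group) (a : G) : ginv G (ginv G a) = a.
Proof. symmetry. apply ginv_unique. apply gmul_Vr. Qed.

Lemma countP_nil {T} (P : T -> Prop) : countP P [] = 0%nat.
Proof. reflexivity. Qed.

Lemma countP_cons {T} (P : T -> Prop) x l :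
  countP P (x :: l) = ((if excluded_middle_informative (P x) then 1 else 0) + countP P l)%nat.
Proof. unfold countP; simpl. destruct (excluded_middle_informative (P x)); reflexivity. Qed.

Lemma countP_le_length {T} (P : T -> Prop) l : (countP P l <= length l)%nat.
Proof. induction l; [rewrite ?countP_nil; lia|]. rewrite countP_cons; cbn [length].
  destruct (excluded_middle_informative (P a)); lia. Qed.

Lemma countP_map {T U} (P : U -> Prop) (f : T -> U) l :
  countP P (map f l) = countP (fun x => P (f x)) l.
Proof. induction l; [reflexivity|]. simpl map. rewrite !countP_cons, IHl. reflexivity. Qed.

Lemma countP_ext {T} (P Q : T -> Prop) l : (forall x, P x <-> Q x) -> countP P l = countP Q l.
Proof. intro H. induction l; [reflexivity|]. rewrite !countP_cons, IHl.
  destruct (excluded_middle_informative (P a)), (excluded_middle_informative (Q a)); firstorder. Qed.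

Lemma countP_split {T} (P Q R0 : T -> Prop) l : (forall x, P x -> Q x \/ R0 x) ->
  (countP P l <= countP Q l + countP R0 l)%nat.
Proof. intro H. induction l; [rewrite ?countP_nil; lia|]. rewrite !countP_cons.
  destruct (excluded_middle_informative (P a)), (excluded_middle_informative (Q a)),
     (excluded_middle_informative (R0 a)); try lia. destruct (H a p); contradiction. Qed.

Lemma countP_incl {T} (P : T -> Prop) l1 l2 : NoDup l1 ->
  (countP (fun x => P x /\ In x l2) l1 <= countP P l2)%nat.
Proof.
  intro Hnd. unfold countP. apply NoDup_incl_length.
  - apply NoDup_filter; auto.
  - intros x Hx. apply filter_In in Hx as [Hx1 Hx2].
    destruct (excluded_middle_informative (P x /\ In x l2)) as [[Hp Hi]|]; [|discriminate].
    apply filter_In. split; auto. destruct (excluded_middle_informative (P x)); tauto.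
Qed.

Lemma countP_compare {T} (P : T -> Prop) l1 l2 : NoDup l1 ->
  (countP P l1 <= countP P l2 + countP (fun x => ~ In x l2) l1)%nat.
Proof.
  intro Hnd. eapply Nat.le_trans.
  - apply (countP_split P (fun x => P x /\ In x l2) (fun x => ~ In x l2)).
    intros x Hx. destruct (classic (In x l2)); tauto.
  - pose proof (countP_incl P l1 l2 Hnd). lia.
Qed.

Lemma map_mul_NoDup (G : Group) (h : G) K : NoDup K -> NoDup (map (gmul G h) K).
Proof.
  intro H. apply Injective_map_NoDup; auto.
  intros x y E. rewrite <- (gmul_KV G h x), <- (gmul_KV G h y), E. reflexivity.
Qed.

Lemma translate_count (G : Group) (h : G) K (P : G -> Prop) : NoDup K ->
  (countP P (map (gmul G h) K) <= countP P K + symdiff_card G h K)%nat /\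
  (countP P K <= countP P (map (gmul G h) K) + symdiff_card G h K)%nat.
Proof.
  intro Hnd. unfold symdiff_card. split.
  - pose proof (countP_compare P (map (gmul G h) K) K (map_mul_NoDup G h K Hnd)). lia.
  - pose proof (countP_compare P K (map (gmul G h) K) Hnd). lia.
Qed.

Definition indic {T} (P : T -> Prop) (x : T) : R :=
  if excluded_middle_informative (P x) then 1 else 0.

Fixpoint sumL {T} (f : T -> R) (l : list T) : R :=
  match l with [] => 0 | x :: l' => f x + sumL f l' end.

Definition avg {T} (K : list T) (f : T -> R) : R := sumL f K / INR (length K).

Lemma sumL_add {T} (f g : T -> R) l : sumL (fun x => f x + g x) l = sumL f l + sumL g l.
Proof. induction l; simpl; lra. Qed.
Lemma sumL_scal {T} (c : R) (f : T -> R) l : sumL (fun x => c * f x) l = c * sumL f l.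
Proof. induction l; simpl; [lra|rewrite IHl; ring]. Qed.
Lemma sumL_const {T} (c : R) (l : list T) : sumL (fun _ => c) l = c * INR (length l).
Proof. induction l; simpl length; [simpl; ring|]. rewrite S_INR. simpl. rewrite IHl. ring. Qed.
Lemma sumL_le {T} (f g : T -> R) l : (forall x, f x <= g x) -> sumL f l <= sumL g l.
Proof. intro H; induction l; simpl; [lra|]. specialize (H a); lra. Qed.
Lemma sumL_ge_elem {T} (f : T -> R) l x : (forall y, 0 <= f y) -> In x l -> f x <= sumL f l.
Proof. intros H Hi; induction l; [destruct Hi|]. simpl. destruct Hi as [->|Hi].
  - assert (0 <= sumL f l) by (clear IHl; induction l as [|b l' IH]; simpl; [lra|]; specialize (H b); lra). lra.
  - specialize (IHl Hi). specialize (H a). lra. Qed.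
Lemma sumL_indic {T} (P : T -> Prop) l : sumL (indic P) l = INR (countP P l).
Proof. induction l; [reflexivity|]. rewrite countP_cons, plus_INR. simpl. rewrite IHl.
  unfold indic. destruct (excluded_middle_informative (P a)); simpl; lra. Qed.

Lemma len_pos {T} (K : list T) : K <> [] -> 0 < INR (length K).
Proof. intro H. destruct K; [congruence|]. simpl length. rewrite S_INR. pose proof (pos_INR (length K)). lra. Qed.


Lemma avg_indic {T} (P : T -> Prop) (K : list T) :
  avg K (indic P) = INR (countP P K) / INR (length K).
Proof. unfold avg. rewrite sumL_indic. reflexivity. Qed.
Lemma avg_add {T} (K : list T) f g : avg K (fun x => f x + g x) = avg K f + avg K g.
Proof. unfold avg. rewrite sumL_add. unfold Rdiv. ring. Qed.
Lemma avg_scal {T} (K : list T) c f : avg K (fun x => c * f x) = c * avg K f.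
Proof. unfold avg. rewrite sumL_scal. unfold Rdiv. ring. Qed.
Lemma avg_const {T} (K : list T) c : K <> [] -> avg K (fun _ => c) = c.
Proof. intro H. unfold avg. rewrite sumL_const. pose proof (len_pos K H). field. lra. Qed.
Lemma avg_le {T} (K : list T) f g : K <> [] -> (forall x, f x <= g x) -> avg K f <= avg K g.
Proof. intros H Hle. unfold avg. pose proof (len_pos K H). apply Rmult_le_compat_r.
  - left; apply Rinv_0_lt_compat; auto.
  - apply sumL_le; auto. Qed.

Definition upd {G : Type} (y : nat -> G) (m : nat) (x : G) : nat -> G :=
  fun l => if Nat.eq_dec l m then x else y l.

Fixpoint Ex {G : Type} (g0 : G) (K : nat -> list G) (m : nat) (F : (nat -> G) -> R) : R :=
  match m with
  | O => F (fun _ => g0)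
  | S m' => avg (K m') (fun x => Ex g0 K m' (fun y => F (upd y m' x)))
  end.

Lemma Ex_add {G} (g0 : G) K m F F' :
  Ex g0 K m (fun y => F y + F' y) = Ex g0 K m F + Ex g0 K m F'.
Proof. revert F F'; induction m; intros; simpl; [reflexivity|].
  rewrite <- avg_add. f_equal. apply functional_extensionality; intro x. apply IHm. Qed.
Lemma Ex_scal {G} (g0 : G) K m c F :
  Ex g0 K m (fun y => c * F y) = c * Ex g0 K m F.
Proof. revert F; induction m; intros; simpl; [reflexivity|].
  rewrite <- avg_scal. f_equal. apply functional_extensionality; intro x. apply IHm. Qed.
Lemma Ex_const {G} (g0 : G) K m c : (forall l, K l <> []) ->
  Ex g0 K m (fun _ => c) = c.
Proof. intro HK; induction m; simpl; [reflexivity|]. rewrite IHm. apply avg_const; auto. Qed.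
Lemma Ex_le {G} (g0 : G) K m F F' : (forall l, K l <> []) ->
  (forall y, F y <= F' y) -> Ex g0 K m F <= Ex g0 K m F'.
Proof. intro HK; revert F F'; induction m; intros F F' H; simpl; [auto|].
  apply avg_le; auto. Qed.

Fixpoint sumN (f : nat -> R) (k : nat) : R :=
  match k with O => 0 | S k' => sumN f k' + f k' end.

Lemma Ex_sum {G} (g0 : G) K m (F : nat -> (nat -> G) -> R) k : (forall l, K l <> []) ->
  Ex g0 K m (fun y => sumN (fun j => F j y) k) = sumN (fun j => Ex g0 K m (F j)) k.
Proof. intro HK; induction k; simpl. - apply Ex_const; auto.
  - rewrite Ex_add, IHk. reflexivity. Qed.

Lemma prodR_ext f g n : (forall l, (l < n)%nat -> f l = g l) -> prodR f n = prodR g n.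
Proof. induction n; intro H; simpl; [reflexivity|]. rewrite IHn, H; auto. Qed.

Lemma Ex_prod {G} (g0 : G) K m (f : nat -> G -> R) :
  Ex g0 K m (fun y => prodR (fun l => f l (y l)) m) = prodR (fun l => avg (K l) (f l)) m.
Proof. induction m; simpl; [reflexivity|].
  transitivity (avg (K m) (fun x => f m x * prodR (fun l => avg (K l) (f l)) m)).
  - f_equal. apply functional_extensionality; intro x.
    rewrite <- IHm. rewrite <- Ex_scal. f_equal. apply functional_extensionality; intro y.
    unfold upd at 2. destruct (Nat.eq_dec m m); [|congruence].
    rewrite (prodR_ext _ (fun l => f l (y l))). ring.
    intros l Hl. unfold upd. destruct (Nat.eq_dec l m); [lia|reflexivity].
  - set (c := prodR (fun l => avg (K l) (f l)) m).
    replace (fun x => f m x * c) with (fun x => c * f m x)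
      by (apply functional_extensionality; intro; ring).
    rewrite avg_scal. ring.
Qed.

Lemma Ex_CS {G} (g0 : G) K m F : (forall l, K l <> []) ->
  Ex g0 K m F * Ex g0 K m F <= Ex g0 K m (fun y => F y * F y).
Proof. intro HK. set (c := Ex g0 K m F).
  assert (H0 : Ex g0 K m (fun _ => 0) <= Ex g0 K m (fun y => (F y - c) * (F y - c))).
  { apply Ex_le; auto. intro y. pose proof (Rle_0_sqr (F y - c)). unfold Rsqr in *. lra. }
  rewrite Ex_const in H0 by auto.
  replace (fun y => (F y - c) * (F y - c)) with
    (fun y => (F y * F y + (-2*c) * F y) + (c*c)) in H0
    by (apply functional_extensionality; intro; ring).
  rewrite Ex_add, Ex_add, Ex_scal, Ex_const in H0 by auto. fold c in H0. nra.
Qed.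

Lemma sumN_le f g k : (forall i, (i < k)%nat -> f i <= g i) -> sumN f k <= sumN g k.
Proof. induction k; intro H; simpl; [lra|]. pose proof (H k ltac:(lia)).
  assert (sumN f k <= sumN g k) by (apply IHk; intros; apply H; lia). lra. Qed.
Lemma sumN_const c k : sumN (fun _ => c) k = c * INR k.
Proof. induction k; simpl sumN; [simpl; ring|]. rewrite IHk, S_INR. ring. Qed.
Lemma sumN_mulr f c k : sumN f k * c = sumN (fun i => f i * c) k.
Proof. induction k; simpl; [ring|]. rewrite <- IHk. ring. Qed.
Lemma sumN_mull f c k : c * sumN f k = sumN (fun i => c * f i) k.
Proof. induction k; simpl; [ring|]. rewrite <- IHk. ring. Qed.
Lemma sumN_ext f g k : (forall i, (i < k)%nat -> f i = g i) -> sumN f k = sumN g k.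
Proof. induction k; intro H; simpl; [reflexivity|]. rewrite IHk, H; auto. Qed.
Lemma sumN_sq f k : sumN f k * sumN f k = sumN (fun i => sumN (fun j => f i * f j) k) k.
Proof. rewrite sumN_mulr. apply sumN_ext. intros i _. rewrite sumN_mull. reflexivity. Qed.
Lemma sumN_ite (i : nat) U c k :
  sumN (fun j => if Nat.eq_dec j i then U else c) k =
  c * INR k + (if Compare_dec.lt_dec i k then U - c else 0).
Proof. induction k; simpl sumN.
  - destruct (Compare_dec.lt_dec i 0); [lia|simpl; ring].
  - rewrite IHk, S_INR. destruct (Nat.eq_dec k i) as [->|].
    + destruct (Compare_dec.lt_dec i i); [lia|]. destruct (Compare_dec.lt_dec i (S i)); [|lia]. ring.
    + destruct (Compare_dec.lt_dec i k), (Compare_dec.lt_dec i (S k)); try lia; ring.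
Qed.

Lemma prodR_mul f g n : prodR f n * prodR g n = prodR (fun l => f l * g l) n.
Proof. induction n; simpl; [ring|]. rewrite <- IHn. ring. Qed.
Lemma prodR_bounds f n : (forall l, (l < n)%nat -> 0 <= f l <= 1) ->
  0 <= prodR f n <= 1.
Proof. induction n; intro H; simpl; [lra|].
  assert (0 <= prodR f n <= 1) by (apply IHn; intros; apply H; lia).
  pose proof (H n ltac:(lia)). nra. Qed.
Lemma prodR_pos f n : (forall l, (l < n)%nat -> 0 < f l) -> 0 < prodR f n.
Proof. induction n; intro H; simpl; [lra|].
  assert (0 < prodR f n) by (apply IHn; intros; apply H; lia).
  pose proof (H n ltac:(lia)). nra. Qed.
Lemma prodR_le_factor f n m : (forall l, (l < n)%nat -> 0 <= f l <= 1) -> (m < n)%nat ->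
  prodR f n <= f m.
Proof. induction n; intros H Hm; [lia|]. simpl.
  assert (0 <= prodR f n <= 1) by (apply prodR_bounds; intros; apply H; lia).
  pose proof (H n ltac:(lia)).
  destruct (Nat.eq_dec m n) as [->|]. - nra.
  - assert (prodR f n <= f m) by (apply IHn; [intros; apply H|]; lia).
    pose proof (H m ltac:(lia)). nra. Qed.
Lemma prodR_close x y n d : 0 <= d ->
  (forall l, (l < n)%nat -> 0 <= x l <= 1 /\ 0 <= y l <= 1 /\ x l - d <= y l <= x l + d) ->
  prodR x n - INR n * d <= prodR y n <= prodR x n + INR n * d.
Proof. intro Hd. induction n; intro H; simpl prodR; [simpl; lra|].
  assert (IH : prodR x n - INR n * d <= prodR y n <= prodR x n + INR n * d)
    by (apply IHn; intros; apply H; lia).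
  assert (0 <= prodR x n <= 1) by (apply prodR_bounds; intros; apply H; lia).
  assert (0 <= prodR y n <= 1) by (apply prodR_bounds; intros; apply H; lia).
  destruct (H n ltac:(lia)) as [Hx [Hy Hxy]]. rewrite S_INR.
  set (X := prodR x n) in *. set (Y := prodR y n) in *. set (N := INR n) in *.
  assert (HN : 0 <= N) by apply pos_INR.
  assert (E : Y * y n - X * x n = (Y - X) * y n + X * (y n - x n)) by ring.
  assert (-(N*d) <= (Y - X) * y n <= N * d) by (split; nra).
  assert (- d <= X * (y n - x n) <= d) by (split; nra).
  lra.
Qed.

Lemma ratio_bounds (G : Group) (P : G -> Prop) K : K <> [] -> 0 <= ratio G P K <= 1.
Proof. intro H. unfold ratio. pose proof (len_pos K H).
  pose proof (countP_le_length P K). apply le_INR in H1. pose proof (pos_INR (countP P K)).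
  split.
  - apply Rmult_le_pos; [lra|]. left; apply Rinv_0_lt_compat; lra.
  - apply (Rmult_le_reg_r (INR (length K))); auto. unfold Rdiv.
    rewrite Rmult_assoc, Rinv_l by lra. lra. Qed.

Definition Ev (G : Group) (P : list G -> Prop) : Prop :=
  exists H eta, 0 < eta /\ forall K, invariant G H eta K -> P K.

Lemma Ev_true (G : Group) (P : list G -> Prop) : (forall K, P K) -> Ev G P.
Proof. intro H. exists [], 1. split; [lra|]. auto. Qed.

Lemma Ev_inv (G : Group) : Ev G (fun K => NoDup K /\ K <> []).
Proof. exists [], 1. split; [lra|]. intros K [H1 [H2 _]]. auto. Qed.

Lemma Ev_and (G : Group) (P Q : list G -> Prop) : Ev G P -> Ev G Q -> Ev G (fun K => P K /\ Q K).
Proof. intros [H1 [e1 [He1 HP]]] [H2 [e2 [He2 HQ]]].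
  exists (H1 ++ H2), (Rmin e1 e2). split. { apply Rmin_pos; auto. }
  intros K [Hnd [Hne Hinv]]. split.
  - apply HP. repeat split; auto. intros h Hh.
    pose proof (Hinv h ltac:(apply in_or_app; auto)). pose proof (Rmin_l e1 e2). lra.
  - apply HQ. repeat split; auto. intros h Hh.
    pose proof (Hinv h ltac:(apply in_or_app; auto)). pose proof (Rmin_r e1 e2). lra.
Qed.

Lemma Ev_impl (G : Group) (Q : Prop) (P : list G -> Prop) : (Q -> Ev G P) -> Ev G (fun K => Q -> P K).
Proof. intro H. destruct (classic Q) as [q|nq].
  - destruct (H q) as [H1 [e [He HP]]]. exists H1, e. split; auto.
  - apply Ev_true. intros; contradiction. Qed.

Lemma Ev_forall_lt (G : Group) (P : nat -> list G -> Prop) k :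
  (forall j, (j < k)%nat -> Ev G (P j)) -> Ev G (fun K => forall j, (j < k)%nat -> P j K).
Proof. induction k; intro H.
  - apply Ev_true. intros; lia.
  - destruct (Ev_and G (fun K => forall j, (j < k)%nat -> P j K) (P k)) as [H1 [e [He HP]]].
    + apply IHk. intros; apply H; lia.
    + apply H; lia.
    + exists H1, e. split; auto. intros K Hk j Hj. destruct (HP K Hk) as [Ha Hb].
      destruct (Nat.eq_dec j k) as [->|]; auto. apply Ha; lia.
Qed.

Lemma Ev_trans (G : Group) (h : G) eta0 : 0 < eta0 ->
  Ev G (fun K => forall P, ratio G P (map (gmul G h) K) <= ratio G P K + eta0 /\
                          ratio G P K <= ratio G P (map (gmul G h) K) + eta0).
Proof. intro He. exists [h], eta0. split; auto. intros K [Hnd [Hne Hinv]] P.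
  specialize (Hinv h (or_introl eq_refl)).
  destruct (translate_count G h K P Hnd) as [T1 T2].
  apply le_INR in T1, T2. rewrite plus_INR in T1, T2.
  pose proof (len_pos K Hne). unfold ratio. rewrite length_map.
  set (L := INR (length K)) in *.
  assert (INR (symdiff_card G h K) < eta0 * L).
  { apply (Rmult_lt_compat_r L) in Hinv; auto. unfold Rdiv in Hinv.
    rewrite Rmult_assoc, Rinv_l in Hinv by lra. lra. }
  split; apply (Rmult_le_reg_r L); auto; unfold Rdiv; rewrite Rmult_plus_distr_r, !Rmult_assoc, Rinv_l by lra; lra.
Qed.

Lemma dens_exists (G : Group) (HG : amenable G) (C : G -> Prop) :
  exists d, banach_density G C d.
Proof.
  destruct (completeness (upper_admissible G C)) as [d Hd].
  - exists 1. intros a Ha. destruct (Ha [] 1 ltac:(lra)) as [K [[_ [Hne _]] Hr]].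
    pose proof (ratio_bounds G C K Hne). lra.
  - exists 0. intros H e He. destruct (HG H e He) as [K HK]. exists K. split; auto.
    destruct HK as [_ [Hne _]]. apply ratio_bounds; auto.
  - exists d; exact Hd.
Qed.

Lemma dens_le1 (G : Group) (C : G -> Prop) d : banach_density G C d -> d <= 1.
Proof. intros [_ Hd]. apply Hd. intros a Ha. destruct (Ha [] 1 ltac:(lra)) as [K [[_ [Hne _]] Hr]].
  pose proof (ratio_bounds G C K Hne). lra. Qed.

Lemma Ev_upper (G : Group) (C : G -> Prop) d b : banach_density G C d -> d < b ->
  Ev G (fun K => ratio G C K < b).
Proof. intros [Hub Hl] Hdb.
  assert (~ upper_admissible G C b) as Hn.
  { intro Ha. specialize (Hub b Ha). lra. }
  unfold upper_admissible in Hn.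
  apply not_all_ex_not in Hn as [H Hn]. apply not_all_ex_not in Hn as [e Hn].
  apply imply_to_and in Hn as [He Hn].
  exists H, e. split; auto. intros K HK. apply Rnot_le_lt. intro Hr. apply Hn. exists K. auto.
Qed.

Lemma choose_lower (G : Group) (C : G -> Prop) d (P : list G -> Prop) delta :
  banach_density G C d -> Ev G P -> 0 < delta ->
  exists K, P K /\ NoDup K /\ K <> [] /\ d - delta <= ratio G C K.
Proof. intros [Hub Hl] [H [e [He HP]]] Hdelta.
  assert (exists a, upper_admissible G C a /\ d - delta < a) as [a [Ha Hda]].
  { apply NNPP. intro Hn. assert (d <= d - delta); [|lra]. apply Hl. intros a Ha.
    apply Rnot_lt_le. intro. apply Hn. exists a; auto. }
  destruct (Ha H e He) as [K [HK Hr]]. exists K. destruct HK as [Hnd [Hne Hi]].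
  repeat split; auto. - apply HP. repeat split; auto. - lra.
Qed.

Lemma ratio_map (G : Group) (P : G -> Prop) (h : G) K :
  ratio G P (map (gmul G h) K) = ratio G (fun x => P (gmul G h x)) K.
Proof. unfold ratio. rewrite countP_map, length_map. reflexivity. Qed.

Lemma ratio_ext (G : Group) (P Q : G -> Prop) K : (forall x, P x <-> Q x) ->
  ratio G P K = ratio G Q K.
Proof. intro H. unfold ratio. rewrite (countP_ext P Q K H). reflexivity. Qed.

Lemma ind_mul {T} (P Q : T -> Prop) x : indic P x * indic Q x = indic (fun z => P z /\ Q z) x.
Proof. unfold indic. destruct (excluded_middle_informative (P x)), (excluded_middle_informative (Q x)),
  (excluded_middle_informative (P x /\ Q x)); try tauto; lra. Qed.

Lemma alpha_bounds (G : Group) n A alpha :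
  (forall i, (i < n)%nat -> banach_density G (A i) (alpha i)) ->
  (forall i, (i < n)%nat -> 0 < alpha i) ->
  forall i, (i < n)%nat -> 0 <= alpha i <= 1.
Proof. intros Hd Hp i Hi. split. - left; auto. - eapply dens_le1; eauto. Qed.

Section Core.
End Core.

Lemma props_exist (G : Group) (HG : amenable G) (C : G -> Prop) a eps delta k (g : nat -> G) :
  banach_density G C a -> 0 < delta ->
  exists K, NoDup K /\ K <> [] /\
   (forall j, (j < k)%nat -> a - delta <= ratio G (fun x => C (gmul G (ginv G (g j)) x)) K <= a + delta) /\
   (forall i, (i < k)%nat -> forall j, (j < k)%nat -> (i < j)%nat ->
       ~ DeltaSet G eps C (gmul G (ginv G (g i)) (g j)) ->
       ratio G (fun x => C (gmul G (ginv G (g i)) x) /\ C (gmul G (ginv G (g j)) x)) K <= eps + delta).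
Proof.
  intros Hd Hdel.
  assert (Hd2 : 0 < delta / 2) by lra.
  set (Tr := fun (h : G) K => forall P, ratio G P (map (gmul G h) K) <= ratio G P K + delta/2 /\
                          ratio G P K <= ratio G P (map (gmul G h) K) + delta/2).
  set (Cp := fun i j => fun x => C x /\ ltranslate G (gmul G (ginv G (g i)) (g j)) C x).
  set (P := fun K => ratio G C K < a + delta/2 /\
      (forall j, (j < k)%nat -> Tr (ginv G (g j)) K) /\
      (forall i, (i < k)%nat -> forall j, (j < k)%nat -> ((i < j)%nat ->
         ~ DeltaSet G eps C (gmul G (ginv G (g i)) (g j)) ->
         ratio G (Cp i j) K < eps + delta/2))).
  assert (HEv : Ev G P).
  { apply Ev_and; [|apply Ev_and].
    - eapply Ev_upper; eauto. lra.
    - apply Ev_forall_lt. intros j _. apply Ev_trans; auto.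
    - apply Ev_forall_lt. intros i _. apply Ev_forall_lt. intros j _.
      apply Ev_impl. intros _. apply Ev_impl. intros Hn.
      destruct (dens_exists G HG (Cp i j)) as [d Hdd].
      assert (d <= eps).
      { apply Rnot_lt_le. intro. apply Hn. exists d. split; auto. }
      eapply Ev_upper; eauto. lra. }
  destruct (choose_lower G C a P (delta/2) Hd HEv Hd2) as [K [[HP1 [HP2 HP3]] [Hnd [Hne Hlow]]]].
  exists K. split; [auto|split; [auto|split]].
  - intros j Hj. rewrite <- ratio_map. destruct (HP2 j Hj C). lra.
  - intros i Hi j Hj Hij Hn. specialize (HP3 i Hi j Hj Hij Hn).
    destruct (HP2 i Hi (Cp i j)) as [T1 _]. rewrite ratio_map in T1.
    rewrite <- (ratio_ext G (fun x => Cp i j (gmul G (ginv G (g i)) x))). { lra. }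
    intro x. unfold Cp, ltranslate. rewrite ginv_mul, ginv_inv, <- gmul_assoc, gmul_VK. tauto.
Qed.

Lemma core (G : Group) (HG : amenable G) (n : nat)
  (A : nat -> G -> Prop) (alpha : nat -> R)
  (Hdens : forall i, (i < n)%nat -> banach_density G (A i) (alpha i))
  (Hpos : forall i, (i < n)%nat -> 0 < alpha i)
  (eps : R) (Heps0 : 0 <= eps) (Heps1 : eps < (prodR alpha n) ^ 2)
  (k : nat) (g : nat -> G)
  (Hbad : forall i j, (i < j)%nat -> (j < k)%nat -> exists l, (l < n)%nat /\
      ~ DeltaSet G eps (A l) (gmul G (ginv G (g i)) (g j))) :
  INR k * ((prodR alpha n)^2 - eps) <= prodR alpha n - eps.
Proof.
  set (beta := prodR alpha n) in *.
  pose proof (alpha_bounds G n A alpha Hdens Hpos) as Hab.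
  assert (Hb : 0 <= beta <= 1) by (apply prodR_bounds; auto).
  assert (Hbp : 0 < beta) by (apply prodR_pos; auto).
  assert (Hbe : eps < beta) by nra.
  apply Rnot_lt_le; intro Hlt.
  set (gam := INR k * (beta^2 - eps) - (beta - eps)).
  assert (Hgam : 0 < gam) by (unfold gam; lra).
  set (N := INR n). set (Kr := INR k).
  assert (HN : 0 <= N) by apply pos_INR.
  assert (HKr0 : 0 <= Kr) by apply pos_INR.
  assert (HKr : 1 <= Kr).
  { destruct k. - unfold gam in Hgam; simpl in Hgam. lra.
    - unfold Kr. rewrite S_INR. pose proof (pos_INR k). lra. }
  set (delta := Rmin (gam / (2*(2*Kr*N + Kr + N + 1))) (beta / (N + 1))).
  assert (Hdp : 0 < delta).
  { apply Rmin_pos; apply Rdiv_lt_0_compat; nra. }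
  assert (Hd1 : delta * (2*Kr*N + Kr + N + 1) < gam).
  { pose proof (Rmin_l (gam / (2*(2*Kr*N + Kr + N + 1))) (beta / (N + 1))). fold delta in H.
    assert (0 < 2*Kr*N + Kr + N + 1) by nra.
    apply (Rmult_le_compat_r (2*Kr*N + Kr + N + 1)) in H; [|lra].
    unfold Rdiv in H. replace (gam * / (2 * (2 * Kr * N + Kr + N + 1)) * (2 * Kr * N + Kr + N + 1))
      with (gam / 2) in H by (field; lra). lra. }
  assert (Hd2 : delta * N <= beta).
  { pose proof (Rmin_r (gam / (2*(2*Kr*N + Kr + N + 1))) (beta / (N + 1))). fold delta in H.
    apply (Rmult_le_compat_r (N + 1)) in H; [|lra].
    unfold Rdiv in H. replace (beta * / (N + 1) * (N + 1)) with beta in H by (field; lra). nra. }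
  set (gA := fun l j x => A l (gmul G (ginv G (g j)) x)).
  assert (Hex : forall l, exists K, (NoDup K /\ K <> []) /\ ((l < n)%nat ->
   (forall j, (j < k)%nat -> alpha l - delta <= ratio G (gA l j) K <= alpha l + delta) /\
   (forall i, (i < k)%nat -> forall j, (j < k)%nat -> (i < j)%nat ->
       ~ DeltaSet G eps (A l) (gmul G (ginv G (g i)) (g j)) ->
       ratio G (fun x => gA l i x /\ gA l j x) K <= eps + delta))).
  { intro l. destruct (Compare_dec.lt_dec l n) as [Hl|Hl].
    - destruct (props_exist G HG (A l) (alpha l) eps delta k g (Hdens l Hl) Hdp)
        as [K [H1 [H2 [H3 H4]]]].
      exists K. split; auto.
    - exists [gone G]. split; [split; [constructor; [intros []|constructor]|congruence]|].
      intro; lia. }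
  set (Kf := fun l => proj1_sig (constructive_indefinite_description _ (Hex l))).
  assert (HKf : forall l, (NoDup (Kf l) /\ Kf l <> []) /\ ((l < n)%nat ->
   (forall j, (j < k)%nat -> alpha l - delta <= ratio G (gA l j) (Kf l) <= alpha l + delta) /\
   (forall i, (i < k)%nat -> forall j, (j < k)%nat -> (i < j)%nat ->
       ~ DeltaSet G eps (A l) (gmul G (ginv G (g i)) (g j)) ->
       ratio G (fun x => gA l i x /\ gA l j x) (Kf l) <= eps + delta))).
  { intro l. unfold Kf. destruct (constructive_indefinite_description _ (Hex l)). exact a. }
  clearbody Kf. clear Hex.
  assert (HKne : forall l, Kf l <> []) by (intro l; apply (HKf l)).
  set (F := fun y : nat -> G => sumN (fun j => prodR (fun l => indic (gA l j) (y l)) n) k).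
  set (u := fun j => prodR (fun l => ratio G (gA l j) (Kf l)) n).
  set (w := fun i j => prodR (fun l => ratio G (fun x => gA l i x /\ gA l j x) (Kf l)) n).
  assert (EF : Ex (gone G) Kf n F = sumN u k).
  { unfold F. rewrite (Ex_sum _ _ _ (fun j y => prodR (fun l => indic (gA l j) (y l)) n)) by auto.
    apply sumN_ext. intros j _. cbv beta. rewrite (Ex_prod (gone G) Kf n (fun l => indic (gA l j))). apply prodR_ext. intros l _.
    rewrite avg_indic. reflexivity. }
  assert (EF2 : Ex (gone G) Kf n (fun y => F y * F y) = sumN (fun i => sumN (fun j => w i j) k) k).
  { replace (fun y => F y * F y) with (fun y => sumN (fun i => sumN (fun j =>
        prodR (fun l => indic (fun x => gA l i x /\ gA l j x) (y l)) n) k) k).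
    2:{ apply functional_extensionality; intro y. unfold F. rewrite sumN_sq.
        apply sumN_ext; intros i _. apply sumN_ext; intros j _. rewrite prodR_mul.
        apply prodR_ext; intros l _. rewrite ind_mul. reflexivity. }
    rewrite (Ex_sum _ _ _ (fun i y => sumN (fun j =>
        prodR (fun l => indic (fun x => gA l i x /\ gA l j x) (y l)) n) k)) by auto.
    apply sumN_ext; intros i _. cbv beta.
    rewrite (Ex_sum _ _ _ (fun j y => 
        prodR (fun l => indic (fun x => gA l i x /\ gA l j x) (y l)) n)) by auto.
    apply sumN_ext; intros j _. cbv beta. rewrite (Ex_prod (gone G) Kf n (fun l => indic (fun x => gA l i x /\ gA l j x))). apply prodR_ext; intros l _.
    rewrite avg_indic. reflexivity. }
  assert (Hu : forall j, (j < k)%nat -> beta - N * delta <= u j <= beta + N * delta).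
  { intros j Hj. unfold u, beta, N. apply prodR_close; [lra|]. intros l Hl.
    destruct (HKf l) as [[_ Hne] H2]. destruct (H2 Hl) as [H3 _].
    split; [auto|split; [apply ratio_bounds; auto|apply H3; auto]]. }
  assert (Hw : forall i j, (i < k)%nat -> (j < k)%nat ->
     w i j <= if Nat.eq_dec j i then beta + N * delta else eps + delta).
  { intros i j Hi Hj. destruct (Nat.eq_dec j i) as [->|Hne].
    - unfold w. rewrite (prodR_ext _ (fun l => ratio G (gA l i) (Kf l))).
      + apply (Hu i Hi).
      + intros l _. apply ratio_ext. tauto.
    - assert (Hrb : forall l, (l < n)%nat -> 0 <= ratio G (fun x => gA l i x /\ gA l j x) (Kf l) <= 1)
        by (intros; apply ratio_bounds; auto).
      destruct (Compare_dec.lt_dec i j) as [Hij|Hij].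
      + destruct (Hbad i j Hij Hj) as [l [Hl Hn]].
        eapply Rle_trans. { apply (prodR_le_factor _ n l); auto. }
        destruct (HKf l) as [_ H2]. destruct (H2 Hl) as [_ H3]. apply H3; auto.
      + assert (Hji : (j < i)%nat) by lia.
        destruct (Hbad j i Hji Hi) as [l [Hl Hn]].
        eapply Rle_trans. { apply (prodR_le_factor _ n l); auto. }
        destruct (HKf l) as [_ H2]. destruct (H2 Hl) as [_ H3].
        rewrite (ratio_ext G _ (fun x => gA l j x /\ gA l i x)) by tauto. apply H3; auto. }
  assert (HCS := Ex_CS (gone G) Kf n F HKne).
  rewrite EF, EF2 in HCS.
  assert (Hlow : Kr * (beta - N * delta) <= sumN u k).
  { unfold Kr. rewrite Rmult_comm, <- sumN_const. apply sumN_le. intros j Hj. apply Hu; auto. }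
  assert (Hup : sumN (fun i => sumN (fun j => w i j) k) k <=
      Kr * ((eps + delta) * Kr + (beta + N * delta - (eps + delta)))).
  { unfold Kr. rewrite Rmult_comm, <- sumN_const. apply sumN_le. intros i Hi.
    eapply Rle_trans. { apply (sumN_le _ (fun j => if Nat.eq_dec j i then beta + N * delta else eps + delta)).
      intros j Hj. apply Hw; auto. }
    rewrite sumN_ite. destruct (Compare_dec.lt_dec i k); [|lia]. lra. }
  assert (H0 : 0 <= Kr * (beta - N * delta)) by nra.
  assert (Hsq : (Kr * (beta - N * delta)) * (Kr * (beta - N * delta)) <=
      Kr * ((eps + delta) * Kr + (beta + N * delta - (eps + delta)))).
  { assert (Kr * (beta - N * delta) * (Kr * (beta - N * delta)) <= sumN u k * sumN u k)
      by (apply Rmult_le_compat; lra). lra. }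
  assert (Hsq2 : Kr * ((beta - N * delta) * (beta - N * delta)) <=
      (eps + delta) * Kr + (beta + N * delta - (eps + delta))).
  { apply (Rmult_le_reg_l Kr); [lra|]. nra. }
  assert (Hexp : Kr * (beta*beta) - 2 * Kr * N * delta <= Kr * ((beta - N * delta) * (beta - N * delta))).
  { assert (HNd : 0 <= N * delta) by nra.
    assert (0 <= (1 - beta) * (N * delta)) by nra.
    assert (0 <= (N * delta) * (N * delta)) by nra.
    assert (beta * beta - 2 * N * delta <= (beta - N * delta) * (beta - N * delta)) by nra.
    replace (Kr * (beta * beta) - 2 * Kr * N * delta) with (Kr * (beta * beta - 2 * N * delta)) by ring.
    apply Rmult_le_compat_l; lra. }
  assert (gam <= delta * (2*Kr*N + Kr + N)).
  { unfold gam. replace (beta ^ 2) with (beta * beta) by ring. fold Kr. lra. }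
  nra.
Qed.

Lemma max_exists (P : nat -> Prop) b : P 0%nat -> (forall k, P k -> (k <= b)%nat) ->
  exists k, P k /\ ~ P (S k).
Proof. revert P; induction b; intros P H0 Hb.
  - exists 0%nat. split; auto. intro H1. specialize (Hb 1%nat H1). lia.
  - destruct (classic (P (S b))) as [Hs|Hs].
    + exists (S b). split; auto. intro H1. specialize (Hb _ H1). lia.
    + apply IHb; auto. intros k Hk. specialize (Hb k Hk).
      destruct (Nat.eq_dec k (S b)); [subst; contradiction|lia].
Qed.

Lemma cover_count (G : Group) (F : list G) (P : G -> G -> Prop) (K : list G) :
  (forall x, In x K -> exists f, In f F /\ P f x) ->
  INR (length K) <= sumL (fun f => INR (countP (P f) K)) F.
Proof. induction K as [|x K IH]; intro H.
  - apply Rle_trans with (sumL (fun _ => 0) F).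
    + rewrite sumL_const; simpl; lra.
    + apply sumL_le; intro; apply pos_INR.
  - simpl length. rewrite S_INR.
    replace (fun f => INR (countP (P f) (x :: K))) with
      (fun f => indic (fun f => P f x) f + INR (countP (P f) K)).
    2:{ apply functional_extensionality; intro f. rewrite countP_cons, plus_INR. unfold indic.
        destruct (excluded_middle_informative (P f x)); simpl; lra. }
    rewrite sumL_add.
    assert (IH' := IH (fun y Hy => H y (or_intror Hy))).
    destruct (H x (or_introl eq_refl)) as [f [Hf Hp]].
    assert (1 <= sumL (indic (fun f => P f x)) F).
    { replace 1 with (indic (fun f => P f x) f).
      - apply sumL_ge_elem; auto. intro y; unfold indic; destruct (excluded_middle_informative _); lra.
      - unfold indic; destruct (excluded_middle_informative _); tauto. }
    lra.
Qed.

Lemma syndetic_density (G : Group) (HG : amenable G) (r : nat) (S : G -> Prop) :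
  syndetic G r S -> exists l, lower_banach_density G S l /\ 1 / INR r <= l.
Proof.
  intros [F [HFr HF]].
  destruct (completeness (lower_admissible G S)) as [l Hl].
  - exists 1. intros a [H [e [He Ha]]]. destruct (HG H e He) as [K HK].
    specialize (Ha K HK). destruct HK as [_ [Hne _]].
    pose proof (ratio_bounds G S K Hne). lra.
  - exists 0. exists [], 1. split; [lra|]. intros K [_ [Hne _]].
    apply ratio_bounds; auto.
  - exists l. split; [exact Hl|].
    set (m := length F).
    assert (Hm : (1 <= m)%nat).
    { destruct (HF (gone G)) as [f [s [Hf _]]]. unfold m. destruct F; [destruct Hf|simpl; lia]. }
    assert (HmR : 1 <= INR m) by (apply (le_INR 1); auto).
    assert (HmrR : INR m <= INR r) by (apply le_INR; auto).
    assert (Hadm : forall delta, 0 < delta -> lower_admissible G S (1 / INR m - delta)).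
    { intros delta Hd. exists (map (ginv G) F), delta. split; auto.
      intros K HK. destruct HK as [Hnd [Hne Hinv]].
      pose proof (len_pos K Hne) as HL.
      set (L := INR (length K)) in *.
      set (c := INR (countP S K)).
      assert (Hcov : L <= sumL (fun f => INR (countP (fun x => S (gmul G (ginv G f) x)) K)) F).
      { apply cover_count. intros x _. destruct (HF x) as [f [s [Hf [Hs ->]]]].
        exists f. split; auto. rewrite gmul_KV. auto. }
      assert (Hterm : forall f, In f F -> INR (countP (fun x => S (gmul G (ginv G f) x)) K) <= c + delta * L).
      { intros f Hf. rewrite <- countP_map.
        destruct (translate_count G (ginv G f) K S Hnd) as [T1 _].
        apply le_INR in T1. rewrite plus_INR in T1.
        specialize (Hinv (ginv G f) (in_map _ _ _ Hf)).
        assert (INR (symdiff_card G (ginv G f) K) < delta * L).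
        { apply (Rmult_lt_compat_r L) in Hinv; auto. unfold Rdiv in Hinv.
          rewrite Rmult_assoc, Rinv_l in Hinv by lra. lra. }
        unfold c. lra. }
      assert (Hsum : sumL (fun f => INR (countP (fun x => S (gmul G (ginv G f) x)) K)) F <= INR m * (c + delta * L)).
      { unfold m. clear Hcov HFr HF Hm HmR HmrR m Hinv. induction F as [|f F' IHF]; cbn [sumL length]; [simpl; lra|].
        rewrite S_INR.
        assert (H1 := Hterm f (or_introl eq_refl)).
        assert (H2 := IHF (fun f' Hf' => Hterm f' (or_intror Hf'))). lra. }
      unfold ratio. fold c L.
      assert (L <= INR m * c + INR m * delta * L) by lra.
      apply (Rmult_le_reg_r (INR m * L)); [nra|].
      unfold Rdiv. replace ((1 * / INR m - delta) * (INR m * L)) with (L - INR m * delta * L) by (field; lra).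
      replace (c * / L * (INR m * L)) with (INR m * c) by (field; lra). lra. }
    assert (Hlm : 1 / INR m <= l).
    { apply Rnot_lt_le. intro Hlt. set (d := (1 / INR m - l) / 2).
      assert (0 < d) by (unfold d; lra).
      pose proof (proj1 Hl _ (Hadm d H)). unfold d in H0. lra. }
    assert (1 / INR r <= 1 / INR m).
    { unfold Rdiv. rewrite !Rmult_1_l. apply Rinv_le_contravar; lra. }
    lra.
Qed.

Theorem mainTheorem10 (G : Group) (HG : amenable G) (n : nat)
  (A : nat -> G -> Prop) (alpha : nat -> R)
  (Hdens : forall i, (i < n)%nat -> banach_density G (A i) (alpha i))
  (Hpos : forall i, (i < n)%nat -> 0 < alpha i)
  (eps : R) (Heps0 : 0 <= eps) (Heps1 : eps < (prodR alpha n) ^ 2)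
  (r : nat)
  (Hr : INR r <= (prodR alpha n - eps) / ((prodR alpha n) ^ 2 - eps) < INR r + 1) :
  let S := fun g : G => forall i, (i < n)%nat -> DeltaSet G eps (A i) g in
  syndetic G r S /\
  exists l, lower_banach_density G S l /\ 1 / INR r <= l.
Proof.
  intro S.
  assert (Hsyn : syndetic G r S).
  { set (bad := fun (g : nat -> G) k => forall i j, (i < j)%nat -> (j < k)%nat -> exists l, (l < n)%nat /\
      ~ DeltaSet G eps (A l) (gmul G (ginv G (g i)) (g j))).
    assert (Hbound : forall k, (exists g, bad g k) -> (k <= r)%nat).
    { intros k [g Hg]. pose proof (core G HG n A alpha Hdens Hpos eps Heps0 Heps1 k g Hg) as Hc.
      set (beta := prodR alpha n) in *.
      assert (INR k <= (beta - eps) / (beta ^ 2 - eps)).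
      { apply (Rmult_le_reg_r (beta ^ 2 - eps)); [lra|]. unfold Rdiv.
        rewrite Rmult_assoc, Rinv_l by lra. lra. }
      destruct Hr as [_ Hr2]. assert (INR k < INR (r + 1)) by (rewrite plus_INR; change (INR 1) with 1; lra).
      apply INR_lt in H0. lia. }
    destruct (max_exists (fun k => exists g, bad g k) r) as [k [[g Hg] Hmax]].
    { exists (fun _ => gone G). unfold bad; intros; lia. }
    { exact Hbound. }
    exists (map g (seq 0 k)). split.
    { rewrite length_map, length_seq. apply Hbound. eauto. }
    intro x.
    set (g' := fun j => if Nat.eq_dec j k then x else g j).
    assert (Hnb : ~ bad g' (Datatypes.S k)) by (intro; apply Hmax; eauto).
    unfold bad in Hnb.
    apply not_all_ex_not in Hnb as [i Hnb]. apply not_all_ex_not in Hnb as [j Hnb].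
    apply imply_to_and in Hnb as [Hij Hnb]. apply imply_to_and in Hnb as [Hj Hnb].
    destruct (Nat.eq_dec j k) as [->|Hjk].
    - assert (Hik : i <> k) by lia.
      unfold g' in Hnb. destruct (Nat.eq_dec i k); [lia|]. destruct (Nat.eq_dec k k); [|lia].
      exists (g i), (gmul G (ginv G (g i)) x). split; [|split].
      + apply in_map. apply in_seq. lia.
      + intros l Hl. apply NNPP. intro Hd. apply Hnb. exists l. auto.
      + rewrite gmul_VK. reflexivity.
    - exfalso. apply Hnb. unfold g'.
      destruct (Nat.eq_dec i k); [lia|]. destruct (Nat.eq_dec j k); [lia|].
      apply Hg; lia. }
  split; auto.
  apply syndetic_density; auto.
Qed.
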